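(* Let $\vartheta=\vartheta_{\{a,b,c\}}^{\mathcal B,h}$ be a $3$-molecule with base $\{a,b,c\}$ and further vertices $v_1,\dots,v_h$, and let $C_3$ be the $3$-cycle on vertices $\{a,v_1,z\}$, where $z$ is a new vertex. Let $G=C_3+_{av_1}\vartheta$ be the $2$-sum of $C_3$ and $\vartheta$ along the edge $av_1$ (present in both). If $\{a,v_1\}$ is not contained in any minimal edge cover set of $\vartheta$, then $\mathrm{Ent}(G)\ge4$.
   Context: Graphs are finite and undirected; connectivity of a graph is the largest $k$ such that one must remove at least $k$ vertices to disconnect it (by convention $K_m$, $m\ge3$, has connectivity $m-1$). $3$-molecule: for $h\ge1$, base $\{a,b,c\}$ and a set $\mathcal B$ of edges among $a,b,c$, $\vartheta_{\{a,b,c\}}^{\mathcal B,h}$ has vertex set $\{a,b,c,v_1,\dots,v_h\}$ and edge set $\mathcal B\cup\{v_ix:1\le i\le h,\ x\in\{a,b,c\}\}$, with the requirement $h\ge 3-k'$, $k'$ the connectivity of the subgraph induced by $\{a,b,c\}$. $2$-sum: for graphs $G_1,G_2$ and edges $e_1=a_1b_1\in E_{G_1}$, $e_2=a_2b_2\in E_{G_2}$, $G_1+_{e_1e_2}G_2$ is obtained from the disjoint union by identifying $a_1$ with $a_2$ and $b_1$ with $b_2$ and deleting $e_1$ and $e_2$ (here the edge $av_1$ of $C_3$ is identified with the edge $av_1$ of $\vartheta$). An edge cover set is a set of vertices containing an endpoint of every edge; a minimal edge cover set means one of minimum cardinality (for a $3$-molecule this cardinality is $3$). Entanglement: in the game $\mathrm{Ent}(G,k)$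 Thief plays against $k$ cops. Initially no cop is placed and Thief picks a vertex. Each round, Cops may do nothing, place a new cop (at most $k$ in total) on Thief's current vertex, or move a placed cop to Thief's current vertex; then Thief must move along an edge to an adjacent vertex not occupied by a cop, and is caught if he cannot. Infinite plays are won by Thief. $\mathrm{Ent}(G)$ is the least $k$ for which Cops have a winning strategy. *)

(* Defs.v *)
From mathcomp Require Import all_boot.
Set Implicit Arguments. Unset Strict Implicit. Unset Printing Implicit Defensive.

Section Graphs.
Variable T : finType.

Definition induced_connected (e : rel T) (U : {set T}) : bool :=
  [forall x in U, forall y in U,
     connect [rel u v | [&& e u v, u \in U & v \in U]] x y].

(* removing S disconnects the graph, or leaves at most one vertex
   (this gives K_m connectivity m-1, and 0 for disconnected graphs) *)
Definition is_cut (e : rel T) (S : {set T}) : bool :=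
  (#|~: S| <= 1) || ~~ induced_connected e (~: S).

Definition connectivity (e : rel T) : nat :=
  \big[minn/#|T|]_(S : {set T} | is_cut e S) #|S|.

Definition edge_cover (e : rel T) (S : {set T}) : bool :=
  [forall x, forall y, e x y ==> (x \in S) || (y \in S)].

(* minimal edge cover set = edge cover set of minimum cardinality *)
Definition min_edge_cover (e : rel T) (S : {set T}) : bool :=
  edge_cover e S && [forall S' : {set T}, edge_cover e S' ==> (#|S| <= #|S'|)].

Inductive cop_move := Stay | Place | MoveFrom of T.

Definition move_valid (k : nat) (C : {set T}) (m : cop_move) : bool :=
  match m with
  | Stay => true
  | Place => #|C| < k
  | MoveFrom u => u \in C
  end.

Definition apply_move (t : T) (C : {set T}) (m : cop_move) : {set T} :=
  match m with
  | Stay => C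
  | Place => t |: C
  | MoveFrom u => t |: (C :\ u)
  end.

(* Cops strategy: depends on the history t_0 ... t_n of Thief positions
   (the rest of the history is determined by the strategy itself) *)
Definition strategy := seq T -> cop_move.

Definition hist (t : nat -> T) (n : nat) : seq T := mkseq t n.+1.

Fixpoint cops (s : strategy) (t : nat -> T) (n : nat) : {set T} :=
  match n with
  | 0 => set0
  | n'.+1 => apply_move (t n') (cops s t n') (s (hist t n'))
  end.

Definition thief_legal (e : rel T) (s : strategy) (t : nat -> T) (n : nat) :=
  e (t n) (t n.+1) && (t n.+1 \notin cops s t n.+1).

Definition legal_upto (e : rel T) (s : strategy) (t : nat -> T) (n : nat) :=
  forall i, i < n -> thief_legal e s t i.

Definition winning_strategy (e : rel T) (k : nat) (s : strategy) : Prop :=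
  (forall (t : nat -> T) (n : nat), legal_upto e s t n ->
      move_valid k (cops s t n) (s (hist t n)))
  /\ ~ (exists t : nat -> T, forall n, thief_legal e s t n).

Definition cops_win (e : rel T) (k : nat) : Prop :=
  exists s : strategy, winning_strategy e k s.

End Graphs.

(* vertices: inl 0 = a, inl 1 = b, inl 2 = c, inr i = v_(i+1) *)
Notation mol_vert h := ('I_3 + 'I_h)%type.

Definition mol_rel (B : rel 'I_3) (h : nat) : rel (mol_vert h) :=
  fun x y => match x, y with
  | inl i, inl j => B i j
  | inl _, inr _ => true
  | inr _, inl _ => true
  | inr _, inr _ => false
  end.
Arguments mol_rel B h : clear implicits.

Definition mol_a (h : nat) : mol_vert h := inl ord0.
Arguments mol_a h : clear implicits.
Definition mol_v1 (h : nat) (hh : 0 < h) : mol_vert h := inr (Ordinal hh).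

(* 2-sum C_3 +_{a v1} theta, C_3 on {a, v1, z}; None = z *)
Definition twosum_rel (B : rel 'I_3) (h : nat) (hh : 0 < h)
  : rel (option (mol_vert h)) :=
  fun x y => match x, y with
  | Some u, Some w => mol_rel B h u w &&
      ~~ (((u == mol_a h) && (w == mol_v1 hh)) || ((u == mol_v1 hh) && (w == mol_a h)))
  | None, Some w => (w == mol_a h) || (w == mol_v1 hh)
  | Some u, None => (u == mol_a h) || (u == mol_v1 hh)
  | None, None => false
  end.

(* Main.v *)
Require Import Defs.
From mathcomp Require Import all_boot.
From Stdlib Require Import FunctionalExtensionality.
Set Implicit Arguments. Unset Strict Implicit. Unset Printing Implicit Defensive.


Lemma cops_ext (T : finType) (s : strategy T) (t t' : nat -> T) m :
  (forall i, i < m -> t i = t' i) -> cops s t m = cops s t' m.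
Proof.
elim: m => [//|m IH] H /=.
have Hh : hist t m = hist t' m.
  rewrite /hist /mkseq; apply/eq_in_map => i; rewrite mem_iota add0n => /andP[_ Hi].
  exact: H.
rewrite IH; last by move=> i Hi; apply: H; exact: ltnW.
by rewrite Hh H.
Qed.

Lemma card_move (T : finType) k (C : {set T}) t m :
  #|C| <= k -> move_valid k C m -> #|apply_move t C m| <= k.
Proof.
case: m => [//|/=|u] /=.
  move=> _ Hc; rewrite cardsU1; apply: leq_trans Hc.
  by case: (t \notin C).
move=> Hk Hu; rewrite cardsU1.
move: Hk; rewrite (cardsD1 u C) Hu add1n => Hk.
by case: (t \notin C :\ u) => //; apply: ltnW.
Qed.

Lemma apply_sub (T : finType) (C : {set T}) t m :
  apply_move t C m \subset t |: C.
Proof.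
case: m => /=; first exact: subsetUr.
  exact: subxx.
by move=> u; apply: setUS; apply: subsetDl.
Qed.

Section Game.
Variables (T : finType) (e : rel T) (n : nat) (eH : rel 'I_n) (phi : 'I_n -> T)
  (s : strategy T) (u0 : 'I_n).
Definition Nb v := [set w | eH v w].
Definition goodm (C : {set T}) v w :=
  [&& eH v w, w \notin phi @^-1: C & ~~ (Nb w \subset phi @^-1: C)].
Definition fm C v := odflt v [pick w | goodm C v w].
Fixpoint FF m : nat -> 'I_n := match m with
  | 0 => fun _ => u0
  | m'.+1 => fun i => if i <= m' then FF m' i
             else fm (cops s (phi \o FF m') m'.+1) (FF m' m') end.
Definition tH i := FF i i.
Definition tt i := phi (tH i).

Lemma FF_stable m i : i <= m -> FF m i = tH i.
Proof.
elim: m i => [|m IH] i; first by rewrite leqn0 => /eqP->.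
rewrite leq_eqVlt => /orP[/eqP->//|Hi] /=.
by rewrite ltnS in Hi; rewrite Hi IH.
Qed.

Lemma tH_step m : tH m.+1 = fm (cops s tt m.+1) (tH m).
Proof.
have E : cops s (phi \o FF m) m.+1 = cops s tt m.+1.
  by apply: cops_ext => i Hi /=; rewrite /tt FF_stable.
rewrite /tH -E.
change (FF m.+1 m.+1) with (if m.+1 <= m then FF m m.+1 else fm (cops s (phi \o FF m) m.+1) (FF m m)).
by rewrite ltnn.
Qed.
End Game.

Lemma no_win (T : finType) (e : rel T) (n : nat) (eH : rel 'I_n) (phi : 'I_n -> T) :
  injective phi -> (forall x y, eH x y -> e (phi x) (phi y)) ->
  (forall v, ~~ eH v v) ->
  (forall v (D : {set 'I_n}), #|D| <= 3 -> ~~ (Nb eH v \subset D) ->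
     exists w, [&& eH v w, w \notin D & ~~ (Nb eH w \subset D)]) ->
  forall u0 w0, eH u0 w0 ->
  forall k, k <= 3 -> ~ cops_win e k.
Proof.
move=> phiI phiE irr P u0 w0 e0 k k3 [s [Hval Hnot]].
apply: Hnot; exists (tt eH phi s u0).
set t := tt eH phi s u0.
suff Inv : forall m, [/\ legal_upto e s t m,
   ~~ (Nb eH (tH eH phi s u0 m) \subset phi @^-1: cops s t m) & #|cops s t m| <= k].
  by move=> m; case: (Inv m.+1) => L _ _; apply: L.
elim=> [|m [L Nm Cm]].
  split; [by move=> i | | by rewrite /= cards0].
  apply/subsetPn; exists w0; first by rewrite inE.
  by rewrite inE /= in_set0.
set v := tH eH phi s u0 m.
have Cm1 : #|cops s t m.+1| <= k.
  by apply: card_move => //; apply: Hval.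
have Sub : cops s t m.+1 \subset phi v |: cops s t m by exact: apply_sub.
have Hcard : #|phi @^-1: cops s t m.+1| <= 3.
  apply: leq_trans _ (leq_trans Cm1 k3).
  rewrite -(card_imset _ phiI); apply: subset_leq_card.
  apply/subsetP => x /imsetP[y]; rewrite inE => Hy ->; exact: Hy.
have Nm1 : ~~ (Nb eH v \subset phi @^-1: cops s t m.+1).
  apply: contra Nm => /subsetP Hs; apply/subsetP => w Hw.
  have := Hs w Hw; rewrite !inE => Hw'.
  have := subsetP Sub _ Hw'; rewrite !inE => /orP[/eqP/phiI Ewv|//].
  by move: Hw; rewrite inE Ewv (negbTE (irr v)).
have [w Hw] := P _ _ Hcard Nm1.
have Hstep : tH eH phi s u0 m.+1 = fm eH phi (cops s t m.+1) v by exact: tH_step.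
have [w1 [Ew1 Hg]] : exists w1, tH eH phi s u0 m.+1 = w1 /\ goodm eH phi (cops s t m.+1) v w1.
  rewrite Hstep /fm; case: pickP => [x Hx|none]; first by exists x.
  by move: (none w); rewrite /goodm Hw.
move: Hg; rewrite /goodm => /and3P[E1 E2 E3].
have Et : forall i, t i = phi (tH eH phi s u0 i) by [].
have Tl : thief_legal e s t m.
  rewrite /thief_legal !Et Ew1; apply/andP; split; first exact: phiE.
  by move: E2; rewrite inE.
split => //; last by rewrite Ew1.
move=> i; rewrite ltnS leq_eqVlt => /orP[/eqP->//|]; exact: L.
Qed.

Definition en (l : seq (nat * nat)) (x y : nat) : bool := ((x, y) \in l) || ((y, x) \in l).
Definition eL n (l : seq (nat * nat)) : rel 'I_n := fun x y => en l (val x) (val y).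
Definition Nsub n l v (L : seq nat) := all (fun w => en l v w ==> (w \in L)) (iota 0 n).
Definition Pn n l := all (fun v => all (fun x1 => all (fun x2 => all (fun x3 =>
  let L := [:: x1; x2; x3] in ~~ Nsub n l v L ==>
    has (fun w => [&& en l v w, w \notin L & ~~ Nsub n l w L]) (iota 0 n))
  (iota 0 n.+1)) (iota 0 n.+1)) (iota 0 n.+1)) (iota 0 n).
Definition E7 := [:: (0,1);(0,4);(4,2);(4,3);(5,1);(5,2);(5,3);(6,1);(6,2);(6,3)].
Definition E6 := [:: (0,1);(0,4);(4,2);(4,3);(5,1);(5,2);(5,3);(2,3);(1,2)].
Lemma P7 : Pn 7 E7. Proof. vm_compute. reflexivity. Qed.
Lemma P6 : Pn 6 E6. Proof. vm_compute. reflexivity. Qed.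

Lemma Nsub_sub n l (v : 'I_n) (D : {set 'I_n}) (L : seq nat) :
  (forall w : 'I_n, (w \in D) = (val w \in L)) ->
  (Nb (@eL n l) v \subset D) = Nsub n l (val v) L.
Proof.
move=> HD; apply/subsetP/allP => H x.
  rewrite mem_iota add0n => /andP[_ xn]; apply/implyP => Hx.
  have := H (Ordinal xn); rewrite inE /eL /= HD; exact.
rewrite inE /eL HD => Hx.
have := H (val x); rewrite mem_iota add0n ltn_ord => /(_ isT) /implyP; exact.
Qed.

Lemma set3 n (D : {set 'I_n}) : #|D| <= 3 ->
  exists x1 x2 x3, [/\ x1 < n.+1, x2 < n.+1, x3 < n.+1 &
    forall w : 'I_n, (w \in D) = (val w \in [:: x1; x2; x3])].
Proof.
move=> HD.
have Hm : forall w : 'I_n, (w \in D) = (val w \in map val (enum D)).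
  by move=> w; rewrite mem_map ?mem_enum //; exact: val_inj.
have Hb : all (fun x => x < n) (map val (enum D)).
  by apply/allP => x /mapP[y _ ->]; exact: ltn_ord.
have Hs : size (map val (enum D)) <= 3 by rewrite size_map -cardE.
have Hne : forall w : 'I_n, (val w == n) = false by move=> w; apply: ltn_eqF; exact: ltn_ord.
move: Hm Hb Hs; case: (map val (enum D)) => [|a [|b [|c [|d r]]]] //= Hm Hb _.
- exists n, n, n; split; try exact: ltnSn.
  by move=> w; rewrite Hm !inE (ltn_eqF (ltn_ord w)) ?orbF.
- move: Hb => /andP[Ha _]; exists a, n, n; split; try exact: ltnSn; first exact: ltnW.
  by move=> w; rewrite Hm !inE (ltn_eqF (ltn_ord w)) ?orbF.
- move: Hb => /and3P[Ha Hb' _]; exists a, b, n; split; try exact: ltnSn; try exact: ltnW.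
  by move=> w; rewrite Hm !inE (ltn_eqF (ltn_ord w)) ?orbF.
- move: Hb => /and4P[Ha Hb' Hc _]; exists a, b, c; split; try exact: ltnW.
  by [].
Qed.

Lemma Pn_P n l : Pn n l -> forall (v : 'I_n) (D : {set 'I_n}), #|D| <= 3 ->
  ~~ (Nb (@eL n l) v \subset D) ->
  exists w, [&& @eL n l v w, w \notin D & ~~ (Nb (@eL n l) w \subset D)].
Proof.
move=> HP v D HD Hv.
have [x1 [x2 [x3 [h1 h2 h3 HL]]]] := set3 HD.
move: HP => /allP/(_ (val v)); rewrite mem_iota add0n ltn_ord => /(_ isT).
move=> /allP/(_ x1); rewrite mem_iota add0n h1 => /(_ isT).
move=> /allP/(_ x2); rewrite mem_iota add0n h2 => /(_ isT).
move=> /allP/(_ x3); rewrite mem_iota add0n h3 => /(_ isT) /=.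
rewrite -(@Nsub_sub n l v D _ HL) Hv /= => /hasP[w]; rewrite mem_iota add0n => /andP[_ wn].
move=> /and3P[E1 E2 E3]; exists (Ordinal wn).
rewrite /eL /= E1 HL /= E2 /=.
by rewrite (@Nsub_sub n l _ D _ HL).
Qed.

Lemma bigmin_seq (I : eqType) (r : seq I) (P : pred I) (F : I -> nat) x0 i :
  i \in r -> P i -> \big[minn/x0]_(j <- r | P j) F j <= F i.
Proof.
elim: r => [//|a r IH]; rewrite inE big_cons => /orP[/eqP<- Pi|Hi Pi].
  by rewrite Pi geq_minl.
case: (P a); last exact: IH.
by apply: leq_trans (geq_minr _ _) (IH Hi Pi).
Qed.
Lemma conn_le (T : finType) (e : rel T) S : is_cut e S -> connectivity e <= #|S|.
Proof. move=> H; rewrite /connectivity; apply: bigmin_seq => //; exact: mem_index_enum. Qed.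

Definition mkB (p q r : bool) : rel 'I_3 := fun i j =>
  match nat_of_ord i, nat_of_ord j with
  | 0, 1 | 1, 0 => p
  | 0, 2 | 2, 0 => q
  | 1, 2 | 2, 1 => r
  | _, _ => false
  end.
Lemma min_cover_of (T : finType) (e : rel T) (S : {set T}) (L : seq T) :
  edge_cover e S -> #|S| <= 3 -> uniq L ->
  (forall S', edge_cover e S' -> 3 <= size (filter (mem S') L)) ->
  min_edge_cover e S.
Proof.
move=> HS cS uL H; rewrite /min_edge_cover HS /=; apply/forallP => S'.
apply/implyP => /H HS'; apply: leq_trans cS _; apply: leq_trans HS' _.
rewrite -(card_uniqP _); last exact: filter_uniq.
apply: subset_leq_card; apply/subsetP => x; rewrite mem_filter => /andP[] //.
Qed.
Lemma cov (T : finType) (e : rel T) S x y : edge_cover e S -> e x y -> (x \in S) || (y \in S).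
Proof. by move=> /forallP/(_ x)/forallP/(_ y)/implyP. Qed.

Notation o3 i := (@Ordinal 3 i isT).
Lemma I3 (i : 'I_3) : [\/ i = o3 0, i = o3 1 | i = o3 2].
Proof.
case: i => [[|[|[|m]]] Hi] //; [apply: Or31 | apply: Or32 | apply: Or33]; exact: val_inj.
Qed.
Lemma I2 (i : 'I_2) : i = @Ordinal 2 0 isT \/ i = @Ordinal 2 1 isT.
Proof. case: i => [[|[|m]] Hi] //; [left|right]; exact: val_inj. Qed.
Lemma I1 (i : 'I_1) : i = @Ordinal 1 0 isT.
Proof. case: i => [[|m] Hi] //; exact: val_inj. Qed.

Lemma card3 (T : finType) (a b c : T) : #|[set a; b; c]| <= 3.
Proof.
apply: leq_trans (leq_card_setU _ _) _; rewrite cards1 addn1 ltnS.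
by apply: leq_trans (leq_card_setU _ _) _; rewrite !cards1.
Qed.
Lemma mcover1 : min_edge_cover (mol_rel (mkB true true true) 1)
   [set inl (o3 0); inr (@Ordinal 1 0 isT); inl (o3 1)].
Proof.
apply: (@min_cover_of _ _ _ [:: inl (o3 0); inl (o3 1); inl (o3 2); inr (@Ordinal 1 0 isT)]).
- apply/forallP => x; apply/forallP => y; apply/implyP.
  case: x => [i|j]; [case: (I3 i) => -> | rewrite (I1 j)];
  (case: y => [i'|j']; [case: (I3 i') => -> | rewrite (I1 j')]); rewrite !inE //.
- by rewrite card3.
- by [].
move=> S' H.
have := @cov _ _ S' (inl (o3 0)) (inl (o3 1)) H isT.
have := @cov _ _ S' (inl (o3 0)) (inl (o3 2)) H isT.
have := @cov _ _ S' (inl (o3 1)) (inl (o3 2)) H isT.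
have := @cov _ _ S' (inl (o3 0)) (inr (@Ordinal 1 0 isT)) H isT.
have := @cov _ _ S' (inl (o3 1)) (inr (@Ordinal 1 0 isT)) H isT.
have := @cov _ _ S' (inl (o3 2)) (inr (@Ordinal 1 0 isT)) H isT.
rewrite /=.
by case: (_ \in S'); case: (_ \in S'); case: (_ \in S'); case: (_ \in S').
Qed.
Lemma mcover2 : min_edge_cover (mol_rel (mkB true true false) 2)
   [set inl (o3 0); inr (@Ordinal 2 0 isT); inr (@Ordinal 2 1 isT)].
Proof.
apply: (@min_cover_of _ _ _ [:: inl (o3 0); inl (o3 1); inl (o3 2); inr (@Ordinal 2 0 isT); inr (@Ordinal 2 1 isT)]).
- apply/forallP => x; apply/forallP => y; apply/implyP.
  case: x => [i|j]; [case: (I3 i) => -> | case: (I2 j) => ->];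
  (case: y => [i'|j']; [case: (I3 i') => -> | case: (I2 j') => ->]); rewrite !inE //.
- by rewrite card3.
- by [].
move=> S' H.
have := @cov _ _ S' (inl (o3 0)) (inl (o3 1)) H isT.
have := @cov _ _ S' (inl (o3 0)) (inl (o3 2)) H isT.
have := @cov _ _ S' (inl (o3 0)) (inr (@Ordinal 2 0 isT)) H isT.
have := @cov _ _ S' (inl (o3 1)) (inr (@Ordinal 2 0 isT)) H isT.
have := @cov _ _ S' (inl (o3 2)) (inr (@Ordinal 2 0 isT)) H isT.
have := @cov _ _ S' (inl (o3 0)) (inr (@Ordinal 2 1 isT)) H isT.
have := @cov _ _ S' (inl (o3 1)) (inr (@Ordinal 2 1 isT)) H isT.
have := @cov _ _ S' (inl (o3 2)) (inr (@Ordinal 2 1 isT)) H isT.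
rewrite /=.
by case: (_ \in S'); case: (_ \in S'); case: (_ \in S'); case: (_ \in S'); case: (_ \in S').
Qed.


Definition phin (h : nat) (h0 : 0 < h) (h1 : 1 < h) (h2 : 2 < h) (i : nat)
  : option (mol_vert h) :=
  match i with
  | 0 => None
  | 1 => Some (inl (@Ordinal 3 0 isT))
  | 2 => Some (inl (@Ordinal 3 1 isT))
  | 3 => Some (inl (@Ordinal 3 2 isT))
  | 4 => Some (inr (Ordinal h0))
  | 5 => Some (inr (Ordinal h1))
  | _ => Some (inr (Ordinal h2))
  end.

Definition psin h (x : option (mol_vert h)) : nat :=
  match x with None => 0 | Some (inl i) => (val i).+1 | Some (inr j) => val j + 4 end.

Lemma psi_phin h h0 h1 h2 i : i < 7 -> psin (@phin h h0 h1 h2 i) = i.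
Proof. by case: i => [|[|[|[|[|[|[|i]]]]]]]. Qed.

Lemma edges7 (B : rel 'I_3) h (hh : 0 < h) h1 h2 :
  all (fun p => twosum_rel B hh (@phin h hh h1 h2 p.1) (phin hh h1 h2 p.2) &&
                twosum_rel B hh (phin hh h1 h2 p.2) (phin hh h1 h2 p.1)) E7.
Proof. by []. Qed.

Lemma case_ge3 (B : rel 'I_3) h (hh : 0 < h) (h3 : 2 < h) k :
  k <= 3 -> ~ cops_win (twosum_rel B hh) k.
Proof.
have h1 : 1 < h by apply: ltnW.
pose phi := fun i : 'I_7 => phin hh h1 h3 (val i).
apply: (@no_win _ _ 7 (@eL 7 E7) phi).
- move=> x y E; apply: val_inj; change (nat_of_ord x = nat_of_ord y).
  by rewrite -(psi_phin hh h1 h3 (ltn_ord x)) -(psi_phin hh h1 h3 (ltn_ord y)); congr psin.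
- move=> x y; rewrite /eL /en => /orP[] Hxy.
  + by have := allP (edges7 B hh h1 h3) _ Hxy => /andP[].
  + by have := allP (edges7 B hh h1 h3) _ Hxy => /andP[].
- by move=> v; rewrite /eL /en; case: v => [[|[|[|[|[|[|[|v]]]]]]] Hv].
- exact: Pn_P P7.
- by instantiate (1 := @Ordinal 7 1 isT); instantiate (1 := @Ordinal 7 0 isT).
Qed.


Lemma B_eq (B : rel 'I_3) : irreflexive B -> symmetric B ->
  B = mkB (B (o3 0) (o3 1)) (B (o3 0) (o3 2)) (B (o3 1) (o3 2)).
Proof.
move=> irrB symB; apply: functional_extensionality => i;
  apply: functional_extensionality => j.
by case: (I3 i) => ->; case: (I3 j) => ->; rewrite /mkB /= ?irrB // symB.
Qed.

Lemma conn_bad (e : rel 'I_3) S h : is_cut e S -> h + #|S| < 3 -> ~~ (3 - connectivity e <= h).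
Proof.
move=> /conn_le Hc Hh; rewrite -ltnNge.
apply: leq_trans (leq_sub2l 3 Hc).
by rewrite ltn_subRL addnC.
Qed.

Definition phi6n (sw : bool) (i : nat) : option (mol_vert 2) :=
  match i with
  | 0 => None
  | 1 => Some (inl (o3 0))
  | 2 => Some (inl (if sw then o3 2 else o3 1))
  | 3 => Some (inl (if sw then o3 1 else o3 2))
  | 4 => Some (inr (@Ordinal 2 0 isT))
  | _ => Some (inr (@Ordinal 2 1 isT))
  end.

Definition psi6 (sw : bool) (x : option (mol_vert 2)) : nat :=
  match x with None => 0
  | Some (inl i) => if sw then (if val i == 1 then 3 else if val i == 2 then 2 else 1) else (val i).+1
  | Some (inr j) => val j + 4 end.

Lemma psi_phi6 sw i : i < 6 -> psi6 sw (phi6n sw i) = i.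
Proof. by case: sw; case: i => [|[|[|[|[|[|i]]]]]]. Qed.

Lemma win6 (p q r sw : bool) k :
  all (fun pr => twosum_rel (mkB p q r) (isT : 0 < 2) (phi6n sw pr.1) (phi6n sw pr.2) &&
                twosum_rel (mkB p q r) (isT : 0 < 2) (phi6n sw pr.2) (phi6n sw pr.1)) E6 ->
  k <= 3 -> ~ cops_win (twosum_rel (mkB p q r) (isT : 0 < 2)) k.
Proof.
move=> HE.
pose phi := fun i : 'I_6 => phi6n sw (val i).
apply: (@no_win _ _ 6 (@eL 6 E6) phi).
- move=> x y E; apply: val_inj; change (nat_of_ord x = nat_of_ord y).
  by rewrite -(psi_phi6 sw (ltn_ord x)) -(psi_phi6 sw (ltn_ord y)); congr psi6.
- move=> x y; rewrite /eL /en => /orP[] Hxy.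
  + by have := allP HE _ Hxy => /andP[].
  + by have := allP HE _ Hxy => /andP[].
- by move=> v; rewrite /eL /en; case: v => [[|[|[|[|[|[|v]]]]]] Hv].
- exact: Pn_P P6.
- by instantiate (1 := @Ordinal 6 1 isT); instantiate (1 := @Ordinal 6 0 isT).
Qed.

Lemma closed_conn (T : finType) (r : rel T) (A : pred T) x y :
  (forall u v, r u v -> u \in A -> v \in A) -> x \in A -> connect r x y -> y \in A.
Proof.
move=> H Hx /connectP [p Hp ->]; elim: p x Hx Hp => //= a p IH x Hx /andP[Hxa Hp].
exact: IH (H _ _ Hxa Hx) Hp.
Qed.

Lemma cut_of (e : rel 'I_3) (S : {set 'I_3}) (x y : 'I_3) : x \notin S -> y \notin S -> x != y ->
  (forall v, v \notin S -> e x v = false) -> is_cut e S.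
Proof.
move=> Hx Hy Hxy He; rewrite /is_cut; apply/orP; right.
apply/negP => /forallP/(_ x)/implyP; rewrite inE => /(_ Hx).
move=> /forallP/(_ y)/implyP; rewrite inE => /(_ Hy) Hc.
have Hcl : forall u v, [rel u v | [&& e u v, u \in ~: S & v \in ~: S]] u v ->
    u \in pred1 x -> v \in pred1 x.
  move=> u v /= /and3P[Huv Hu Hv] /eqP Eu; move: Huv; rewrite Eu He //.
  by move: Hv; rewrite inE.
have := closed_conn Hcl (eqxx x) Hc.
by rewrite inE eq_sym (negbTE Hxy).
Qed.

Lemma all3 (P : 'I_3 -> Prop) : P (o3 0) -> P (o3 1) -> P (o3 2) -> forall v, P v.
Proof. by move=> H0 H1 H2 v; case: (I3 v) => ->. Qed.

Ltac cutS Z X Y := exfalso; match goal with hconn : is_true (3 - _ <= _) |- _ => move: hconn end;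
  apply/negP; apply: (@conn_bad _ [set o3 Z]);
  [ apply: (@cut_of _ _ (o3 X) (o3 Y)); rewrite ?inE //; apply: all3; rewrite !inE //
  | by rewrite cards1 ].
Ltac cut0 X Y := exfalso; match goal with hconn : is_true (3 - _ <= _) |- _ => move: hconn end;
  apply/negP; apply: (@conn_bad _ set0);
  [ apply: (@cut_of _ _ (o3 X) (o3 Y)); rewrite ?inE //; apply: all3; rewrite !inE //
  | by rewrite cards0 ].

Lemma case_le2 (B : rel 'I_3) h (hh : 0 < h) (h3 : h <= 2) k :
  irreflexive B -> symmetric B ->
  3 - connectivity B <= h ->
  (forall S : {set mol_vert h},
      min_edge_cover (mol_rel B h) S -> ~ (mol_a h \in S /\ mol_v1 hh \in S)) ->
  k <= 3 -> ~ cops_win (twosum_rel B hh) k.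
Proof.
move=> irrB symB.
rewrite (B_eq irrB symB).
move: (B _ _) (B _ _) (B _ _) => p q r.
case: h hh h3 => [//|[|[|//]]] hh _.
- have -> : hh = isT by apply: eq_irrelevance.
  move=> hconn hcov k3.
  case: p hconn hcov; case: q; case: r => hconn hcov;
  try solve [cutS 0 1 2 | cutS 1 0 2 | cutS 2 0 1].
  exfalso; apply: (hcov _ mcover1).
  by rewrite !inE.
- have -> : hh = isT by apply: eq_irrelevance.
  move=> hconn hcov k3.
  case: p hconn hcov; case: q; case: r => hconn hcov;
  try solve [cut0 0 1 | cut0 0 2 | cut0 1 0 | cut0 1 2 | cut0 2 0 | cut0 2 1].
  all: first [ by apply: (@win6 _ _ _ false)
              | by apply: (@win6 _ _ _ true)
              | exfalso; apply: (hcov _ mcover2); by rewrite !inE ].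
Qed.

Theorem mainTheorem11 (B : rel 'I_3) (h : nat) (hh : 0 < h) :
  irreflexive B -> symmetric B ->
  3 - connectivity B <= h ->
  (forall S : {set mol_vert h},
      min_edge_cover (mol_rel B h) S -> ~ (mol_a h \in S /\ mol_v1 hh \in S)) ->
  forall k : nat, cops_win (twosum_rel B hh) k -> 4 <= k.
Proof.
move=> irrB symB hconn hcov k Hw; rewrite leqNgt; apply/negP => k3.
case: (leqP h 2) => h2.
- exact: (case_le2 h2 irrB symB hconn hcov k3 Hw).
- exact: (@case_ge3 B h hh h2 k k3 Hw).
Qed.
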